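(* Let $K$ be a totally ordered quasi-field of characteristic $1$ and let $x\in K$. (a) The set of polynomials $P\in K[X]$ admitting $x$ as a root is the ideal $J$ of $K[X]$ generated by the polynomials $X^k+x^k$, $k\ge 1$. (b) The set of rational polynomials in $K\{X\}$ admitting $x$ as a root is the ideal of $K\{X\}$ generated by (the image of) $X+x$.
   Context: A quasi-field of characteristic $1$ is a commutative semiring $K$ with $1+1=1$ in which every nonzero element is multiplicatively invertible; it is ordered by $a\le b$ iff $a+b=b$, and totally ordered means this order is total (so $a+b=\max(a,b)$). A point $x\in K$ is a root of $P\in K[X]$ if one can write $P=P_1+P_2$ with $P_1,P_2$ having disjoint sets of monomials and $P_1(x)=P_2(x)$ (equivalently, $P(x)=0$ or the maximal value of the monomials of $P$ at $x$ is attained by at least two distinct monomials). The semiring $K[X]$ has no zero divisors but is not cancellative; $K\{X\}$ denotes its image in its quasi-field of fractions, i.e. the quotient of $K[X]$ by the relation $P\sim Q$ iff $RP=RQ$ for some nonzero $R$; its elements are called rational polynomials, and a rational polynomial has $x$ as root if one (equivalently every) representative does. An ideal generated by a set $S$ consists of finite sums of multiples of elements of $S$. *)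

(* Defs.v *)
From HB Require Import structures.
From mathcomp Require Import all_boot all_order all_algebra.
Set Implicit Arguments. Unset Strict Implicit. Unset Printing Implicit Defensive.
Import GRing.Theory.
Local Open Scope ring_scope.

Definition qf_char1_total (K : comNzSemiRingType) : Prop :=
  [/\ (1 + 1 = 1 :> K),
      (forall a : K, a != 0 -> exists b : K, a * b = 1) &
      (forall a b : K, a + b = b \/ b + a = a)].

Definition is_root (K : comNzSemiRingType) (P : {poly K}) (x : K) : Prop :=
  exists P1 P2 : {poly K},
    [/\ P = P1 + P2,
        (forall i : nat, P1`_i = 0 \/ P2`_i = 0) &
        P1.[x] = P2.[x]].

Definition in_ideal_J (K : comNzSemiRingType) (x : K) (P : {poly K}) : Prop :=
  exists s : seq (nat * {poly K}),
    all (fun kq => (0 < kq.1)%N) s /\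
    P = \sum_(kq <- s) kq.2 * ('X^(kq.1) + (x ^+ kq.1)%:P).

(* The relation defining K{X} = K[X]/~ : P ~ Q iff R P = R Q for some R <> 0. *)
Definition ratpoly_eq (K : comNzSemiRingType) (P Q : {poly K}) : Prop :=
  exists R : {poly K}, R != 0 /\ R * P = R * Q.

Definition ratpoly_root (K : comNzSemiRingType) (P : {poly K}) (x : K) : Prop :=
  exists P' : {poly K}, ratpoly_eq P P' /\ is_root P' x.

Definition in_ratideal_Xx (K : comNzSemiRingType) (x : K) (P : {poly K}) : Prop :=
  exists s : seq {poly K},
    ratpoly_eq P (\sum_(q <- s) q * ('X + x%:P)).

(* Main.v *)
Require Import Defs.
From HB Require Import structures.
From mathcomp Require Import all_boot all_order all_algebra.
Import GRing.Theory.
Local Open Scope ring_scope.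

Section Idem.
Variable R : comNzSemiRingType.
Hypothesis h11 : 1 + 1 = 1 :> R.

Lemma idem (a : R) : a + a = a.
Proof. by rewrite -{1 2}[a]mulr1 -mulrDr h11 mulr1. Qed.

Lemma union_sum (t : nat -> R) a b c d :
  (a <= c)%N -> (c <= b)%N -> (b <= d)%N ->
  \sum_(a <= e < b) t e + \sum_(c <= e < d) t e = \sum_(a <= e < d) t e.
Proof.
move=> ac cb bd.
rewrite (big_cat_nat ac cb) (big_cat_nat cb bd) (big_cat_nat ac (leq_trans cb bd)).
rewrite (big_cat_nat cb bd) /=.
by rewrite -addrA [X in _ + X]addrA idem addrA.
Qed.

Lemma shift_sum (t : nat -> R) a b m :
  \sum_(a <= e < b) t (e + m)%N = \sum_(a + m <= e < b + m) t e.
Proof. by rewrite big_addn addnK. Qed.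

Lemma pow_formula (X u a : R) (hu : u = X + a) n :
  u ^+ n = \sum_(0 <= e < n.+1) X ^+ e * a ^+ (n - e).
Proof.
elim: n => [|n IH].
  by rewrite big_nat1 !expr0 mulr1.
rewrite exprSr IH hu mulrDr !big_distrl /=.
have -> : \sum_(0 <= i < n.+1) X ^+ i * a ^+ (n - i) * X =
          \sum_(0 <= i < n.+1) (fun e => X ^+ e * a ^+ (n.+1 - e)) (i + 1)%N.
  apply: eq_bigr => i _ /=.
  by rewrite addn1 subSS mulrAC -exprSr.
have -> : \sum_(0 <= i < n.+1) X ^+ i * a ^+ (n - i) * a =
          \sum_(0 <= i < n.+1) (fun e => X ^+ e * a ^+ (n.+1 - e)) i.
  apply: eq_big_nat => i /andP [_ hi] /=.
  by rewrite -mulrA -exprSr subSn.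
rewrite (shift_sum (fun e => X ^+ e * a ^+ (n.+1 - e))) addrC union_sum ?addn1 //.
Qed.

Lemma pow_gen (X u a : R) (hu : u = X + a) n m : (m <= n.+1)%N ->
  u ^+ n * (X ^+ m + a ^+ m) = u ^+ (n + m).
Proof.
move=> hm.
rewrite !(@pow_formula X u a hu) mulrDr !big_distrl /=.
have -> : \sum_(0 <= i < n.+1) X ^+ i * a ^+ (n - i) * X ^+ m =
          \sum_(0 <= i < n.+1) (fun e => X ^+ e * a ^+ (n + m - e)) (i + m)%N.
  apply: eq_big_nat => i /andP [_ hi] /=.
  by rewrite mulrAC -exprD subnDr.
have -> : \sum_(0 <= i < n.+1) X ^+ i * a ^+ (n - i) * a ^+ m =
          \sum_(0 <= i < n.+1) (fun e => X ^+ e * a ^+ (n + m - e)) i.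
  apply: eq_big_nat => i /andP [_ hi] /=.
  by rewrite -mulrA -exprD addnBAC.
rewrite (shift_sum (fun e => X ^+ e * a ^+ (n + m - e))) add0n addrC union_sum //.
by rewrite addSn ltnS leq_addr.
Qed.
End Idem.
Section Main.
Variable K : comNzSemiRingType.
Hypothesis hK : qf_char1_total K.

Local Notation le a b := (a + b = b)%R.

Lemma h11K : 1 + 1 = 1 :> K. Proof. by case: hK. Qed.

Lemma le_tot (a b : K) : a + b = b \/ a + b = a.
Proof. case: hK => _ _ h; case: (h a b) => e; [left|right] => //; by rewrite addrC. Qed.

Lemma le_refl (a : K) : le a a. Proof. by rewrite -{1 2}[a]mulr1 -mulrDr h11K mulr1. Qed.
Lemma le_trans (a b c : K) : le a b -> le b c -> le a c.
Proof. by move=> h1 h2; rewrite -h2 addrA h1. Qed.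
Lemma le_addl (a b : K) : le a (a + b).
Proof. by rewrite addrA le_refl. Qed.
Lemma le_addr (a b : K) : le b (a + b).
Proof. by rewrite addrA [b + a]addrC -addrA le_refl. Qed.
Arguments le_trans {a b c}.
Lemma le_add (a b c : K) : le a c -> le b c -> le (a + b) c.
Proof. by move=> h1 h2; rewrite -addrA h2 h1. Qed.
Lemma le_mul (a b c : K) : le a b -> le (a * c) (b * c).
Proof. by rewrite -mulrDl => ->. Qed.
Lemma le_anti (a b : K) : le a b -> le b a -> a = b.
Proof. by move=> h1 h2; rewrite -h1 addrC h2. Qed.
Lemma le0 (a : K) : le 0 a. Proof. by rewrite add0r. Qed.
Lemma le_eq0 (a : K) : le a 0 -> a = 0. Proof. by rewrite addr0. Qed.

Lemma le_sum (I : Type) (r : seq I) (Pr : pred I) (F : I -> K) c :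
  (forall i, Pr i -> le (F i) c) -> le (\sum_(i <- r | Pr i) F i) c.
Proof.
move=> h; apply: (big_ind (fun v => le v c)) => //; first exact: le0.
by move=> u v; apply: le_add.
Qed.

Lemma sum_term (I : Type) (r : seq I) (F : I -> K) :
  \sum_(i <- r) F i = 0 \/ exists i, \sum_(i <- r) F i = F i.
Proof.
apply: (big_ind (fun v => v = 0 \/ exists i, v = F i)); first by left.
  move=> u v hu hv; case: (le_tot u v) => ->; [exact: hv | exact: hu].
by move=> i _; right; exists i.
Qed.

Lemma horner_term (Q : {poly K}) x : Q.[x] = 0 \/ exists i, Q.[x] = Q`_i * x ^+ i.
Proof.
rewrite horner_coef; case: (@sum_term _ (index_enum 'I_(size Q)) (fun i : 'I_(size Q) => Q`_i * x ^+ i)).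
  by left.
by move=> [i ->]; right; exists i.
Qed.

Implicit Types (P Q q : {poly K}) (x : K) (i l k : nat).

Definition drop_i (i : nat) (P : {poly K}) :=
  \poly_(l < size P) (if l == i then 0 else P`_l).

Lemma coef_drop i P l : (drop_i i P)`_l = if l == i then 0 else P`_l.
Proof.
rewrite /drop_i coef_poly; case: ltnP => h //.
by case: eqP => // _; rewrite nth_default.
Qed.

Lemma decomp i P : P = (P`_i)%:P * 'X^i + drop_i i P.
Proof.
apply/polyP => l; rewrite coefD coefCM coefXn coef_drop.
by case: eqP => [->|_]; rewrite ?mulr1 ?addr0 ?mulr0 ?add0r.
Qed.

Lemma horner_decomp i P x : P.[x] = P`_i * x ^+ i + (drop_i i P).[x].
Proof. by rewrite {1}(decomp i P) hornerD hornerCM hornerXn. Qed.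

Lemma le_term i P x : le (P`_i * x ^+ i) P.[x].
Proof. by rewrite (horner_decomp i) le_addl. Qed.

Lemma le_other x P i l : l != i -> le (P`_l * x ^+ l) (drop_i i P).[x].
Proof.
move=> hl; have := le_term l (drop_i i P) x.
by rewrite coef_drop (negbTE hl).
Qed.

Lemma drop_add i P Q : drop_i i (P + Q) = drop_i i P + drop_i i Q.
Proof.
by apply/polyP => l; rewrite coefD !coef_drop coefD; case: eqP; rewrite ?addr0.
Qed.

Lemma drop_zero i : drop_i i 0 = 0.
Proof. by apply/polyP => l; rewrite coef_drop coef0; case: eqP. Qed.

Definition Dp x P := forall i, le (P`_i * x ^+ i) (drop_i i P).[x].

Lemma Dp0 x : Dp x 0.
Proof. by move=> i; rewrite coef0 mul0r le0. Qed.

Lemma DpD x P Q : Dp x P -> Dp x Q -> Dp x (P + Q).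
Proof.
move=> hP hQ i; rewrite coefD mulrDl drop_add hornerD.
apply: le_add.
  exact: le_trans (hP i) (le_addl _ _).
exact: le_trans (hQ i) (le_addr _ _).
Qed.

Lemma Dp_gen x k q : (0 < k)%N -> Dp x (q * ('X^k + (x ^+ k)%:P)).
Proof.
move=> hk i; set T := q * _.
have hT m : T`_m = (if (m < k)%N then 0 else q`_(m - k)) + q`_m * x ^+ k.
  by rewrite /T mulrDr coefD coefMXn coefMC.
rewrite hT mulrDl; apply: le_add.
  case: ifP => hik; first by rewrite mul0r le0.
  have hne : (i - k)%N != i.
    by rewrite neq_ltn ltn_subrL hk /= (leq_trans hk) // leqNgt hik.
  apply: (le_trans _ (le_other x T _ _ hne)).
  have -> : q`_(i - k) * x ^+ i = q`_(i - k) * x ^+ k * x ^+ (i - k).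
    by rewrite -mulrA -exprD subnKC // leqNgt hik.
  by rewrite hT; apply: le_mul; apply: le_addr.
have hne : (i + k)%N != i by rewrite -{2}[i]addn0 eqn_add2l -lt0n hk.
apply: (le_trans _ (le_other x T _ _ hne)).
rewrite hT ltnNge leq_addl /= addnK -mulrA -exprD addnC.
by apply: le_mul; apply: le_addl.
Qed.

Lemma Dp_J x P : in_ideal_J x P -> Dp x P.
Proof.
move=> [s [hs ->]]; elim: s hs => [|[k q] s IH] /=; first by move=> _; rewrite big_nil; apply: Dp0.
move=> /andP [hk hs]; rewrite big_cons; apply: DpD; last exact: IH.
exact: Dp_gen.
Qed.

Lemma Dp_root x P : Dp x P -> is_root P x.
Proof.
move=> hD; case: (horner_term P x) => [h0|[i hi]].
  exists 0, P; split; first by rewrite add0r.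
    by move=> i; left; rewrite coef0.
  by rewrite horner0 h0.
exists ((P`_i)%:P * 'X^i), (drop_i i P); split; first exact: decomp.
  move=> l; rewrite coefCM coefXn coef_drop; case: eqP => _; [right|left] => //.
  by rewrite mulr0.
rewrite hornerCM hornerXn -hi.
by rewrite (horner_decomp i) hD.
Qed.

Lemma J0 x : in_ideal_J x 0.
Proof. by exists [::]; split => //; rewrite big_nil. Qed.

Lemma JD x P Q : in_ideal_J x P -> in_ideal_J x Q -> in_ideal_J x (P + Q).
Proof.
move=> [s1 [h1 ->]] [s2 [h2 ->]]; exists (s1 ++ s2); split.
  by rewrite all_cat h1 h2.
by rewrite big_cat.
Qed.

Lemma J_sum x (I : Type) (r : seq I) (Pr : pred I) (F : I -> {poly K}) :
  (forall j, Pr j -> in_ideal_J x (F j)) -> in_ideal_J x (\sum_(j <- r | Pr j) F j).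
Proof.
move=> h; apply: (big_ind (in_ideal_J x)) => //; first exact: J0.
exact: JD.
Qed.

Lemma J_gen x k q : (0 < k)%N -> in_ideal_J x (q * ('X^k + (x ^+ k)%:P)).
Proof. by move=> hk; exists [:: (k, q)]; split; [rewrite /= hk | rewrite big_seq1]. Qed.

Lemma J_A1 x i l c : (i < l)%N ->
  in_ideal_J x (c%:P * 'X^l + (c * x ^+ (l - i))%:P * 'X^i).
Proof.
move=> hl.
have -> : c%:P * 'X^l + (c * x ^+ (l - i))%:P * 'X^i =
          (c%:P * 'X^i) * ('X^(l - i) + (x ^+ (l - i))%:P).
  by rewrite mulrDr -mulrA -exprD subnKC ?(ltnW hl) // polyCM mulrAC.
by apply: J_gen; rewrite subn_gt0.
Qed.

Lemma J_A2 x y i l c : x * y = 1 -> (l < i)%N ->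
  in_ideal_J x (c%:P * 'X^l + (c * y ^+ (i - l))%:P * 'X^i).
Proof.
move=> hxy hl.
have -> : c%:P * 'X^l + (c * y ^+ (i - l))%:P * 'X^i =
          ((c * y ^+ (i - l))%:P * 'X^l) * ('X^(i - l) + (x ^+ (i - l))%:P).
  rewrite mulrDr -mulrA -exprD subnKC ?(ltnW hl) // mulrAC -polyCM -mulrA.
  by rewrite -exprMn [y * x]mulrC hxy expr1n mulr1 addrC.
by apply: J_gen; rewrite subn_gt0.
Qed.

Lemma construct x y P (N : nat) (i0 : 'I_N) : (size P <= N)%N ->
  ((0 < i0)%N -> x * y = 1) ->
  \sum_(l < N | l != i0)
     (if (i0 < l)%N then P`_l * x ^+ (l - i0) else P`_l * y ^+ (i0 - l)) = P`_i0 ->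
  in_ideal_J x P.
Proof.
move=> hs hxy hsum.
have hP : P = \sum_(l < N) (P`_l)%:P * 'X^l.
  under eq_bigr do rewrite mul_polyC.
  rewrite -poly_def; apply/polyP => m; rewrite coef_poly; case: ltnP => // hm.
  by rewrite nth_default // (leq_trans hs hm).
rewrite hP (bigD1 i0) //= -hsum rmorph_sum big_distrl /= addrC -big_split /=.
apply: J_sum => l hl; case: ifP => h.
  exact: J_A1.
have hli : (l < i0)%N by rewrite ltn_neqAle hl /= leqNgt h.
apply: J_A2 => //; apply: hxy; exact: leq_ltn_trans (leq0n l) hli.
Qed.

Lemma root_cases x P : is_root P x ->
  P.[x] = 0 \/ exists i j, [/\ i != j, P.[x] = P`_i * x ^+ i,
                                P.[x] = P`_j * x ^+ j & P.[x] != 0].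
Proof.
move=> [P1 [P2 [eP hd e12]]].
have hPx : P.[x] = P1.[x] by rewrite eP hornerD e12 le_refl.
case: (eqVneq (P1.[x]) 0) => [h0|hn]; first by left; rewrite hPx.
right.
case: (horner_term P1 x) => [h0|[i hi]]; first by rewrite h0 eqxx in hn.
have hP1i : P1`_i != 0 by apply: contraNneq hn => e; rewrite hi e mul0r.
have hP2i : P2`_i = 0 by case: (hd i) => // e; rewrite e eqxx in hP1i.
have eiP : P`_i = P1`_i by rewrite eP coefD hP2i addr0.
have hn2 : P2.[x] != 0 by rewrite -e12.
case: (horner_term P2 x) => [h0|[j hj]]; first by rewrite h0 eqxx in hn2.
have hP2j : P2`_j != 0 by apply: contraNneq hn2 => e; rewrite hj e mul0r.
have hP1j : P1`_j = 0 by case: (hd j) => // e; rewrite e eqxx in hP2j.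
have ejP : P`_j = P2`_j by rewrite eP coefD hP1j add0r.
exists i, j; split.
- by apply/eqP => e; rewrite -e hP2i eqxx in hP2j.
- by rewrite hPx hi eiP.
- by rewrite hPx e12 hj ejP.
- by rewrite hPx.
Qed.

Lemma root_J x P : is_root P x -> in_ideal_J x P.
Proof.
move=> hr; case: (root_cases _ _ hr) => [hz|[i [j [hij ei ej hnz]]]].
  have hterm l : P`_l * x ^+ l = 0.
    by apply: le_eq0; have := le_term l P x; rewrite hz.
  apply: (@construct x 0 P (size P).+1 ord0) => //.
  rewrite big1; last first.
    move=> l hl; have hl0 : (0 < l)%N by rewrite lt0n.
    by rewrite /= hl0 subn0 hterm.
  by have := hterm 0%N; rewrite expr0 mulr1 => ->.
have hx : x != 0.
  apply/eqP => hx0.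
  have hi0 : i = 0%N.
    by move: hnz; rewrite ei hx0 expr0n; case: (eqVneq i 0%N) => // hi; rewrite mulr0n mulr0 eqxx.
  have hj0 : j = 0%N.
    by move: hnz; rewrite ej hx0 expr0n; case: (eqVneq j 0%N) => // hj; rewrite mulr0n mulr0 eqxx.
  by rewrite hi0 hj0 eqxx in hij.
have [y hxy] : exists y, x * y = 1 by case: hK => _ h _; apply: h.
have hsize k : P.[x] = P`_k * x ^+ k -> (k < size P)%N.
  move=> ek; rewrite ltnNge; apply/negP => hk.
  by move: hnz; rewrite ek nth_default // mul0r eqxx.
have hi := hsize i ei; have hj := hsize j ej.
apply: (@construct x y P (size P) (Ordinal hi)) => //.
set d := fun l : nat => if (i < l)%N then P`_l * x ^+ (l - i) else P`_l * y ^+ (i - l).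
have canc (a : K) : a * x ^+ i * y ^+ i = a.
  by rewrite -mulrA -exprMn hxy expr1n mulr1.
have hd l : d l * x ^+ i = P`_l * x ^+ l.
  rewrite /d; case: ifP => h.
    by rewrite -mulrA -exprD subnK // ltnW.
  have hle : (l <= i)%N by rewrite leqNgt h.
  rewrite -{2}(subnK hle) exprD !mulrA -[P`_l * _ * _]mulrA -exprMn [y * x]mulrC hxy.
  by rewrite expr1n mulr1.
have hdle l : le (d l) (P`_i).
  rewrite -(canc (d l)) -(canc (P`_i)); apply: le_mul.
  by rewrite hd -ei; apply: le_term.
have hdj : d j = P`_i.
  by rewrite -(canc (d j)) hd -ej ei canc.
rewrite (bigD1 (Ordinal hj)) /=; last by rewrite -(inj_eq val_inj) /= eq_sym.
rewrite -/(d j) hdj.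
rewrite addrC; apply: le_sum => l _; exact: hdle.
Qed.

Lemma h11P : 1 + 1 = 1 :> {poly K}.
Proof. by rewrite -polyC1 -polyCD h11K. Qed.

Lemma J_ratideal x P : in_ideal_J x P ->
  exists N Q, forall M, (N <= M)%N ->
    ('X + x%:P) ^+ M * P = ('X + x%:P) ^+ M * (Q * ('X + x%:P)).
Proof.
set u := 'X + x%:P.
move=> [s [hs ->]]; elim: s hs => [|[k q] s IH] /=.
  by move=> _; exists 0%N, 0 => M _; rewrite big_nil mul0r.
move=> /andP [hk hs]; have [N [Q hNQ]] := IH hs.
exists (maxn N k), (q * u ^+ k.-1 + Q) => M hM.
rewrite big_cons /= mulrDr (hNQ M); last by rewrite (leq_trans (leq_maxl _ _) hM).
rewrite [in RHS]mulrDl [in RHS]mulrDr; congr (_ + _).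
have hkM : (k.-1 <= M)%N.
  by rewrite (leq_trans (leq_pred _)) // (leq_trans (leq_maxr _ _) hM).
have gen : u ^+ k.-1 * ('X^k + (x ^+ k)%:P) = u ^+ (k.-1 + k).
  rewrite rmorphXn; apply: (@pow_gen _ h11P 'X u (x%:P) erefl).
  by rewrite prednK.
rewrite -(subnK hkM) exprD.
set a := u ^+ (M - k.-1); set b := u ^+ k.-1.
have -> : a * b * (q * ('X^k + (x ^+ k)%:P)) = a * q * (b * ('X^k + (x ^+ k)%:P)).
  by rewrite mulrCA !mulrA [q * a]mulrC.
have gen' : b * ('X^k + (x ^+ k)%:P) = b * b * u.
  by rewrite /b gen -{2}(prednK hk) addnS exprSr exprD.
by rewrite gen' !mulrA [a * q * b]mulrAC.
Qed.

End Main.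

Theorem theorem3p1 (K : comNzSemiRingType) (hK : qf_char1_total K) (x : K) :
  (forall P : {poly K}, is_root P x <-> in_ideal_J x P) /\
  (forall P : {poly K}, ratpoly_root P x <-> in_ratideal_Xx x P).
Proof.
split=> P; split.
- exact: (root_J _ hK).
- by move=> h; apply: (Dp_root _ hK); apply: (Dp_J _ hK).
- move=> [P' [[R1 [hR1 e1]] hr]].
  have [N [Q hNQ]] := J_ratideal _ hK _ _ (root_J _ hK _ _ hr).
  exists [:: Q]; exists (R1 * ('X + x%:P) ^+ N); split.
    rewrite -lead_coef_eq0 lead_coef_Mmonic ?lead_coef_eq0 //.
    by apply: monic_exp; apply: monicXaddC.
  by rewrite big_seq1 mulrAC e1 mulrAC -mulrA (hNQ N) // !mulrA.
- move=> [s [R [hR e]]].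
  exists (\sum_(q <- s) q * ('X + x%:P)); split; first by exists R.
  apply: (Dp_root _ hK); apply: (Dp_J _ hK); apply: J_sum => q _.
  by have := J_gen _ x 1 q; rewrite !expr1; apply.
Qed.
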